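(* Let an instance of the UDODOSP with exact requests $r^d:=r_l^d=r_u^d$ be given and set $R^d=\sum_{i=1}^d r^i$ for $0\le d\le D$ (so $R^0=0$). If the instance is feasible, then $R^D\le N U_w$; $\;N D-R^D\le N U_o$; $\;R^{d+u_w}-R^{d-1}\le N u_w$ for all $1\le d\le D-u_w$; and $\;R^{d+u_o}-R^{d-1}\ge N$ for all $1\le d\le D-u_o$.
   Context: An instance of the Days On Days Off Scheduling Problem (DODOSP) consists of integers $D\ge 1$ (days), $N\ge 1$ (workers), bounds $l_w,u_w,l_o,u_o,U_w,U_o\in\mathbb{N}$, and for each day $d\in\{1,\dots,D\}$ integers $0\le r_l^d\le r_u^d\le N$. A schedule is a map $f:\{n_1,\dots,n_N\}\times\{1,\dots,D\}\to\{\mathrm{ON},\mathrm{OFF}\}$ (not cyclic). A work period (resp. off period) of a worker is an inclusion-wise maximal set of consecutive days on which the worker is ON (resp. OFF). A schedule is feasible if on every day $d$ the number of workers that are ON lies in $[r_l^d,r_u^d]$, every work period has length between $l_w$ and $u_w$, every off period has length between $l_o$ and $u_o$, every worker is ON on at most $U_w$ days and OFF on at most $U_o$ days. An instance is feasible if a feasible schedule exists. The UDODOSP is the DODOSP restricted to instances with $l_w=l_o=1$. *)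

(* Defs.v *)
From mathcomp Require Import all_boot.
Set Implicit Arguments. Unset Strict Implicit. Unset Printing Implicit Defensive.

(* Days are 1..D, workers are 0..N-1.  A schedule is f : worker -> day -> bool,
   with true = ON and false = OFF (values outside the ranges are irrelevant). *)

Definition is_period (g : nat -> bool) (v : bool) (D a b : nat) : Prop :=
  1 <= a /\ a <= b /\ b <= D /\
  (forall d, a <= d <= b -> g d = v) /\
  (a = 1 \/ g a.-1 = ~~ v) /\
  (b = D \/ g b.+1 = ~~ v).

Definition feasible_schedule (D N lw uw lo uo Uw Uo : nat) (rl ru : nat -> nat)
    (f : nat -> nat -> bool) : Prop :=
  [/\ (forall d, 1 <= d <= D ->
         rl d <= \sum_(n < N) (f n d : nat) <= ru d),
      (forall n, n < N -> forall a b, is_period (f n) true D a b ->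
         lw <= b - a + 1 <= uw),
      (forall n, n < N -> forall a b, is_period (f n) false D a b ->
         lo <= b - a + 1 <= uo),
      (forall n, n < N -> \sum_(1 <= d < D.+1) (f n d : nat) <= Uw) &
      (forall n, n < N -> \sum_(1 <= d < D.+1) (~~ f n d : nat) <= Uo)].

Definition feasible_instance (D N lw uw lo uo Uw Uo : nat) (rl ru : nat -> nat) : Prop :=
  exists f, feasible_schedule D N lw uw lo uo Uw Uo rl ru f.

Definition cumreq (r : nat -> nat) (d : nat) : nat := \sum_(1 <= i < d.+1) r i.

(* Main.v *)
Require Import Defs.
From mathcomp Require Import all_boot.
From mathcomp Require Import zify.

Lemma ext_right (g : nat -> bool) v D a : forall k b, D - b = k -> b <= D ->
  (forall d, a <= d <= b -> g d = v) ->
  exists b', [/\ b <= b', b' <= D, (forall d, a <= d <= b' -> g d = v) &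
             (b' = D \/ g b'.+1 = ~~ v)].
Proof.
elim=> [|k IH] b Hk HbD Hg.
  have Eb : b = D by lia.
  by exists b; split => //; left.
case E: (g b.+1 == v).
  have Hg' : forall d, a <= d <= b.+1 -> g d = v.
    move=> d /andP [Ha Hd]; case: (ltngtP d b.+1) => Hdb.
    - apply: Hg; lia.
    - lia.
    - rewrite Hdb; exact/eqP.
  have [b' [H1 H2 H3 H4]] := IH b.+1 ltac:(lia) ltac:(lia) Hg'.
  by exists b'; split => //; lia.
exists b; split => //; right; clear -E; move: E; by case: (g b.+1); case: v.
Qed.

Lemma ext_left (g : nat -> bool) v b : forall a, 1 <= a ->
  (forall d, a <= d <= b -> g d = v) ->
  exists a', [/\ 1 <= a', a' <= a, (forall d, a' <= d <= b -> g d = v) &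
             (a' = 1 \/ g a'.-1 = ~~ v)].
Proof.
elim=> [|a IH] // _ Hg.
case: a IH Hg => [|a] IH Hg.
  by exists 1; split => //; left.
case E: (g a.+1 == v).
  have Hg' : forall d, a.+1 <= d <= b -> g d = v.
    move=> d /andP [Ha Hd]; case: (ltngtP d a.+1) => Hdb.
    - lia.
    - apply: Hg; lia.
    - rewrite Hdb; exact/eqP.
  have [a' [H1 H2 H3 H4]] := IH ltac:(lia) Hg'.
  by exists a'; split => //; lia.
exists a.+2; split => //; right; clear -E; move: E => /=; by case: (g a.+1); case: v.
Qed.

Lemma window (g : nat -> bool) v D u d :
  (forall a b, is_period g v D a b -> b - a + 1 <= u) ->
  1 <= d -> d + u <= D ->
  exists x, d <= x <= d + u /\ g x = ~~ v.
Proof.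
move=> Hp Hd HdD.
case E: [exists i : 'I_(u.+1), g (d + i) != v].
  move/existsP: E => [i Hi]; exists (d + i); split; first by have := ltn_ord i; lia.
  by clear -Hi; move: Hi; case: (g _); case: v.
exfalso.
have Hall : forall x, d <= x <= d + u -> g x = v.
  move=> x Hx.
  have Hi : x - d < u.+1 by lia.
  move/negbT: E; rewrite negb_exists => /forallP /(_ (Ordinal Hi)) /=.
  have -> : d + (x - d) = x by lia.
  by rewrite negbK => /eqP.
have [b' [H1 H2 H3 H4]] := @ext_right g v D d (D - (d + u)) (d + u) (erefl _) HdD Hall.
have [a' [H5 H6 H7 H8]] := @ext_left g v b' d Hd H3.
have := Hp a' b'. rewrite /is_period.
move=> /(_ ltac:(repeat split => //; lia)). lia.
Qed.

Lemma split_at (F : nat -> nat) m n x : m <= x < n ->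
  \sum_(m <= i < n) F i = \sum_(m <= i < x) F i + F x + \sum_(x.+1 <= i < n) F i.
Proof.
move=> /andP [H1 H2].
rewrite (big_cat_nat _ (n := x)) /=; try lia. rewrite (big_ltn H2) /=; lia.
Qed.

Lemma sum_le_len (F : nat -> nat) m n : (forall i, F i <= 1) ->
  \sum_(m <= i < n) F i <= n - m.
Proof.
move=> H; rewrite -[n - m]muln1 -sum_nat_const_nat; apply: leq_sum => i _; exact: H.
Qed.

Lemma sum_ord_const N c : \sum_(n < N) c = N * c.
Proof. by rewrite big_const_ord iter_addn_0 mulnC. Qed.

Lemma b2n_le1 (b : bool) : (b : nat) <= 1.
Proof. by case: b. Qed.

Theorem lemma4p2 (D N uw uo Uw Uo : nat) (r : nat -> nat) :
  1 <= D -> 1 <= N -> (forall d, 1 <= d <= D -> r d <= N) ->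
  feasible_instance D N 1 uw 1 uo Uw Uo r r ->
  [/\ cumreq r D <= N * Uw,
      N * D - cumreq r D <= N * Uo,
      (forall d, 1 <= d <= D - uw -> cumreq r (d + uw) - cumreq r d.-1 <= N * uw) &
      (forall d, 1 <= d <= D - uo -> N <= cumreq r (d + uo) - cumreq r d.-1)].
Proof.
move=> HD HN _ [f [Hreq Hw Ho HUw HUo]].
have Hr : forall d, 1 <= d <= D -> r d = \sum_(n < N) (f n d : nat).
  move=> d Hd; have /andP [A B] := Hreq d Hd; apply/eqP; rewrite eqn_leq A B //.
have Hcum : forall e, e <= D -> cumreq r e = \sum_(n < N) \sum_(1 <= i < e.+1) (f n i : nat).
  move=> e He; rewrite /cumreq (eq_big_nat _ _ (F2 := fun i => \sum_(n < N) (f n i : nat))).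
    by rewrite exchange_big.
  move=> i Hi; apply: Hr; lia.
have Hwin : forall d e, 1 <= d -> d <= e -> e <= D ->
   cumreq r e - cumreq r d.-1 = \sum_(n < N) \sum_(d <= i < e.+1) (f n i : nat).
  move=> d e H1 H2 H3; rewrite !Hcum; try lia.
  have -> : \sum_(n < N) \sum_(1 <= i < e.+1) (f n i : nat) =
     \sum_(n < N) \sum_(1 <= i < d.-1.+1) (f n i : nat) +
     \sum_(n < N) \sum_(d <= i < e.+1) (f n i : nat).
    rewrite -big_split /=; apply: eq_bigr => n _.
    rewrite (big_cat_nat _ (n := d.-1.+1)) //; try lia.
    by rewrite prednK.
  lia.
split.
- rewrite Hcum // -sum_ord_const; apply: leq_sum => n _; exact: HUw.
- rewrite Hcum //.
  have -> : N * D = \sum_(n < N) (\sum_(1 <= i < D.+1) (f n i : nat) +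
                                  \sum_(1 <= i < D.+1) (~~ f n i : nat)).
    rewrite -sum_ord_const; apply: eq_bigr => n _.
    rewrite -big_split /=.
    have E1 : \sum_(1 <= i < D.+1) 1 = D by rewrite sum_nat_const_nat; lia.
    rewrite -[in LHS]E1; apply: eq_bigr => i _; by case: (f n i).
  rewrite big_split /= addKn -sum_ord_const; apply: leq_sum => n _; exact: HUo.
- move=> d Hd; rewrite Hwin; try lia.
  rewrite -sum_ord_const; apply: leq_sum => n _.
  have [x [Hx Hfx]] := @window (f n) true D uw d
     (fun a b Hab => proj2 (andP (Hw n (ltn_ord n) a b Hab))) ltac:(lia) ltac:(lia).
  rewrite (@split_at _ d (d + uw).+1 x) ?Hfx /=; last lia.
  have := @sum_le_len (fun i => f n i : nat) d x (fun i => b2n_le1 (f n i)).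
  have := @sum_le_len (fun i => f n i : nat) x.+1 (d + uw).+1 (fun i => b2n_le1 (f n i)).
  lia.
- move=> d Hd; rewrite Hwin; try lia.
  rewrite -[leqLHS]muln1 -sum_ord_const; apply: leq_sum => n _.
  have [x [Hx Hfx]] := @window (f n) false D uo d
     (fun a b Hab => proj2 (andP (Ho n (ltn_ord n) a b Hab))) ltac:(lia) ltac:(lia).
  rewrite (@split_at _ d (d + uo).+1 x) ?Hfx /=; last lia.
  lia.
Qed.
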